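(* Let $n\ge1$, $\tau:=2n+3$, $K>0$, $a\in(0,1)$, $\rho_0>0$, $\sigma_0>0$, and let $0<\epsilon_0\le aK^{-1}(2\pi)^{-2\tau}$. Then there exists a real sequence $\{d_j\}_{j\in\mathbb{N}}$ with $0\le d_j\le1/6$ for all $j$ such that the sequences defined recursively by $$\epsilon_{j+1}:=Ka^{-1}d_j^{-\tau}\epsilon_j^2,\qquad (\rho_{j+1},\sigma_{j+1}):=(1-3d_j)(\rho_j,\sigma_j)$$ satisfy $\lim_{j\to\infty}\epsilon_j=0$ and $\rho_j\ge\rho_0/2$, $\sigma_j\ge\sigma_0/2$ for all $j$ (so the limits $\rho_*:=\rho_0/2$, $\sigma_*:=\sigma_0/2$ serve as strictly positive lower bounds). *)

(* Defs.v *)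
From HB Require Import structures.
From mathcomp Require Import all_boot all_order all_algebra.
From mathcomp Require Import all_classical all_reals all_analysis.
Set Implicit Arguments. Unset Strict Implicit. Unset Printing Implicit Defensive.
Import Order.TTheory GRing.Theory Num.Theory.
Local Open Scope ring_scope.

Fixpoint kam_eps (R : realType) (K a e0 : R) (tau : nat) (d : nat -> R) (j : nat) : R :=
  match j with
  | 0 => e0
  | j'.+1 => K * a^-1 * (d j') ^- tau * (kam_eps K a e0 tau d j') ^+ 2
  end.

Fixpoint kam_scale (R : realType) (r0 : R) (d : nat -> R) (j : nat) : R :=
  match j with
  | 0 => r0
  | j'.+1 => (1 - 3 * d j') * kam_scale r0 d j'
  end.

(* Main.v *)
Require Import Defs.
From HB Require Import structures.
From mathcomp Require Import all_boot all_order all_algebra.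
From mathcomp Require Import all_classical all_reals all_analysis.
From mathcomp Require Import ring lra zify.
Import Order.TTheory GRing.Theory Num.Theory.
Import numFieldNormedType.Exports Num.Def.
Local Open Scope classical_set_scope.
Local Open Scope ring_scope.

Lemma cos_small_gt0 (R : realType) (x : R) : 0 < x -> x ^+ 2 < 2 -> 0 < cos x.
Proof.
move=> x0 x2.
have h := @cvg_cos_coeff' R x.
rewrite -(cvg_lim (@Rhausdorff R) h).
apply: (@lt_trans _ _ (\sum_(0 <= i < 2) cos_coeff' x i)).
  rewrite big_nat_recr//= big_nat_recr//= big_nil add0r.
  rewrite /cos_coeff' -!exprnP /= expr0 expr1 !mul1r mulN1r.
  rewrite (_ : 2`!%:R = 2 :> R) //.
  rewrite (_ : (0.*2)`!%:R^-1 = 1 :> R) ?invr1 // (_ : x ^+ 1.*2 = x ^+ 2) //. lra.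
apply: lt_sum_lim_series; [by move/cvgP in h|move=> d].
rewrite /cos_coeff' -!exprnP.
set m := (2 + d.*2)%N.
have me : ~~ odd m by rewrite /m oddD odd_double.
rewrite (_ : (2 + d.*2.+1)%N = m.+1); last by rewrite /m addnS.
rewrite exprS -signr_odd (negbTE me) expr0 mulr1 mulN1r mulNr.
have mm : (2 <= m)%N by rewrite /m leq_addr.
clearbody m.
rewrite doubleS (factS (m.*2.+1)) (factS (m.*2)) !natrM.
have fpos : 0 < (m.*2)`!%:R :> R by rewrite ltr0n fact_gt0.
move: fpos; set F := (m.*2)`!%:R => fpos.
rewrite !exprS.
move: (x ^+ m.*2) (exprn_gt0 m.*2 x0) => X Xp.
have big : 2 <= (m.*2.+1)%:R :> R by rewrite ler_nat; lia.
have big2 : 2 <= (m.*2.+2)%:R :> R by rewrite ler_nat; lia.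
move: big big2; set A := (m.*2.+1)%:R; set B := (m.*2.+2)%:R => big big2.
clearbody F A B.
have A0 : A != 0 by rewrite gt_eqF // (lt_le_trans _ big).
have B0 : B != 0 by rewrite gt_eqF // (lt_le_trans _ big2).
have -> : x * (x * X) / (B * (A * F)) = X / F * (x * x / (B * A)).
  by field; rewrite A0 B0 gt_eqF.
rewrite mul1r -[X in 0 < X - _]mulr1 -mulrBr mulr_gt0 ?divr_gt0 // subr_gt0.
rewrite ltr_pdivrMr ?mulr_gt0 ?(lt_le_trans _ big) ?(lt_le_trans _ big2) // mul1r.
rewrite -expr2 (lt_le_trans x2) //.
nra.
Qed.

Lemma pi_ge52 (R : realType) : 5 / 2 <= (pi : R).
Proof.
have c54 : 0 < cos (5 / 4 : R) by apply: cos_small_gt0; lra.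
have /IVT[] : minr (cos (5/4)) (cos 2) <= (0 : R) <= maxr (cos (5/4)) (cos 2).
  - by rewrite le_max (ltW c54) ge_min (ltW (@cos2_lt0 R)) orbC.
  - lra.
  - by apply/continuous_subspaceT => ?; exact: continuous_cos.
move=> y; rewrite in_itv /= => /andP[y1 y2] cy.
have [/andP[p0 p2] cp] := pihalf_02_cos_pihalf R.
have y0 : 0 <= y by apply: le_trans y1; lra.
have E := @cos_02_uniq R (pi / 2) y (introT andP (conj p0 p2)) cp (introT andP (conj y0 y2)) cy.
lra.
Qed.

Lemma scale_bound (R : realType) (r0 : R) (d : nat -> R) :
  0 < r0 -> (forall j, d j = (2^-1) ^+ j / 12) ->
  forall j, r0 * (1/2 + (2^-1) ^+ j / 2) <= kam_scale r0 d j.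
Proof.
move=> r0p dE; elim=> [|j IH] /=.
  lra.
rewrite dE exprS.
have u0 : 0 < (2^-1 : R) ^+ j by rewrite exprn_gt0 // invr_gt0.
have u1 : (2^-1 : R) ^+ j <= 1 by rewrite exprn_ile1 // ?invr_ge0 // invf_le1; lra.
move: IH u0 u1; set u := (2^-1 : R) ^+ j => IH u0 u1.
set s := kam_scale r0 d j in IH *.
have h1 : (1 - 3 * (u / 12)) * (r0 * (1/2 + u/2)) <= (1 - 3 * (u / 12)) * s.
  by rewrite ler_wpM2l //; lra.
apply: le_trans h1.
have : 0 <= r0 * u * (1 - u) by rewrite mulr_ge0 ?mulr_ge0 //; lra.
nra.
Qed.

Lemma eps_bound (R : realType) (K a e0 : R) (tau : nat) (d : nat -> R) :
  0 < K -> 0 < a -> 0 < e0 -> K / a * e0 <= ((24 : R) ^+ tau)^-1 ->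
  (forall j, d j = (2^-1) ^+ j / 12) ->
  forall j, 0 < kam_eps K a e0 tau d j <= e0 * ((2^-1) ^+ j) ^+ tau.
Proof.
move=> Kp ap e0p hc dE; elim=> [|j IH] /=.
  by rewrite e0p expr1n mulr1 lexx.
rewrite dE [(2^-1 : R) ^+ j.+1]exprS.
have u0 : 0 < (2^-1 : R) ^+ j by rewrite exprn_gt0 // invr_gt0.
move: IH u0; set u := (2^-1 : R) ^+ j => /andP[ep ele] u0.
set e := kam_eps K a e0 tau d j in ep ele *.
set c := K / a * e0 in hc.
have cp : 0 < c by rewrite /c !mulr_gt0 ?invr_gt0.
have Pp : 0 < u ^+ tau by rewrite exprn_gt0.
have Qp : 0 < (12:R) ^+ tau by rewrite exprn_gt0.
have Tp : 0 < (2:R) ^+ tau by rewrite exprn_gt0.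
have h24 : (24:R) ^+ tau = 2 ^+ tau * 12 ^+ tau.
  by rewrite -exprMn; congr (_ ^+ _); lra.
rewrite h24 in hc.
rewrite !expr_div_n exprMn_comm ?expr_div_n; last by rewrite /GRing.comm mulrC.
rewrite exprVn.
move: hc Pp Qp Tp ele; set P := u ^+ tau; set Q := (12:R) ^+ tau; set T := (2:R) ^+ tau.
move=> hc Pp Qp Tp ele.
have -> : K / a / (P / Q) * e ^+ 2 = c * Q * (e ^+ 2 / (e0 * P)).
  by rewrite /c; field; rewrite !gt_eqF.
have ePp : 0 < e0 * P by rewrite mulr_gt0.
apply/andP; split; first by rewrite !mulr_gt0 ?invr_gt0 ?exprn_gt0.
have h1 : c * Q <= T^-1.
  by rewrite -ler_pdivlMr // -invfM.
have h2 : e ^+ 2 / (e0 * P) <= e0 * P.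
  by rewrite ler_pdivrMr // -expr2 lerXn2r // ?nnegrE ltW.
rewrite [X in _ <= X]mulrCA.
apply: ler_pM => //; first exact: mulr_ge0 (ltW cp) (ltW Qp).
by rewrite divr_ge0 ?sqr_ge0 ?ltW.
Qed.

Theorem lemma2 (R : realType) (n : nat) (K a rho0 sigma0 eps0 : R) :
  (1 <= n)%N -> 0 < K -> 0 < a -> a < 1 -> 0 < rho0 -> 0 < sigma0 ->
  0 < eps0 -> eps0 <= a * K^-1 * (2 * pi) ^- (2 * (2 * n + 3)) ->
  exists d : nat -> R,
    (forall j, 0 < d j <= 1 / 6) /\
    (kam_eps K a eps0 (2 * n + 3) d @ \oo --> 0) /\
    (forall j, rho0 / 2 <= kam_scale rho0 d j) /\
    (forall j, sigma0 / 2 <= kam_scale sigma0 d j).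
Proof.
move=> n1 Kp ap a1 r0 s0 e0p he.
set tau := (2 * n + 3)%N.
pose d (j : nat) : R := (2^-1) ^+ j / 12.
have dE : forall j, d j = (2^-1) ^+ j / 12 by [].
have u0 j : 0 < (2^-1 : R) ^+ j by rewrite exprn_gt0 // invr_gt0.
have u1 j : (2^-1 : R) ^+ j <= 1 by rewrite exprn_ile1 // ?invr_ge0 // invf_le1; lra.
exists d; split.
  move=> j; rewrite dE; have := u0 j; have := u1 j; move=> h1 h2.
  apply/andP; split; lra.
split; last first.
  split=> j.
    apply: le_trans (@scale_bound R rho0 d r0 dE j).
    have := u0 j; nra.
  apply: le_trans (@scale_bound R sigma0 d s0 dE j).
  have := u0 j; nra.
have pi52 := @pi_ge52 R.
have hc : K / a * eps0 <= ((24 : R) ^+ tau)^-1.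
  have h1 : K / a * eps0 <= ((2 * pi) ^+ (2 * tau))^-1.
    rewrite mulrC -ler_pdivlMr ?divr_gt0 //.
    apply: (le_trans he); rewrite le_eqVlt; apply/orP; left; apply/eqP; field.
    by rewrite !gt_eqF // ?exprn_gt0 ?mulr_gt0 // pi_gt0.
  apply: (le_trans h1); rewrite lef_pV2 ?posrE ?exprn_gt0 ?mulr_gt0 ?pi_gt0 //.
  rewrite exprM lerXn2r ?nnegrE ?exprn_ge0 ?mulr_ge0 ?pi_ge0 //.
  rewrite expr2; nra.
have eb := @eps_bound R K a eps0 tau d Kp ap e0p hc dE.
apply: (@squeeze_cvgr _ _ _ _ (fun _ => 0) (fun j => eps0 * (2^-1 : R) ^+ j)).
- near=> j; have /andP[h1 h2] := eb j; rewrite ltW //=.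
  apply: (le_trans h2); rewrite ler_pM2l //.
  rewrite /tau addnS exprS.
  have := u0 j; have := u1 j; move: ((2^-1 : R) ^+ j) => u p1 p0.
  have : u ^+ (2 * n + 2) <= 1 by rewrite exprn_ile1 // ltW.
  nra.
- exact: cvg_cst.
- rewrite -[X in _ --> X](mulr0 eps0); apply: cvgMl_tmp.
  apply: cvg_expr; rewrite ger0_norm ?invr_ge0 // invf_lt1 //; lra.
Unshelve. all: end_near.
Qed.
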